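(* Let $n\ge 1$ and let $x_1,\dots,x_n$ be distinct integers, each greater than $1$, and let $D=\{1,x_1,\dots,x_n\}$. Then $diam(D)=2$ if $n=1$, $diam(D)=3$ if $n=2$, and $diam(D)=4$ if $n>2$.
   Context: A signed tree is a pair $(T,s)$ where $T$ is a finite tree and $s:E(T)\to\{+,-\}$. The signed degree $sdeg(v)$ of a vertex is the number of incident positive edges minus the number of incident negative edges. $(T,s)$ realizes (satisfies) a set $D$ of integers if $D=\{sdeg(v):v\in V(T)\}$. For a set $D$ containing $1$ or $-1$, $diam(D)=\min\{diam(T): \text{some signed tree }(T,s)\text{ realizes }D\}$, where $diam(T)$ is the diameter of the tree $T$. *)

(* Defs.v *)
From mathcomp Require Import all_boot all_order all_algebra.
Set Implicit Arguments. Unset Strict Implicit. Unset Printing Implicit Defensive.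
Import Order.TTheory GRing.Theory Num.Theory.

Definition simple_graph (m : nat) (e : rel 'I_m) : Prop :=
  (forall x y, e x y = e y x) /\ (forall x, ~~ e x x).

Definition is_tree (m : nat) (e : rel 'I_m) : Prop :=
  0 < m /\ simple_graph e /\
  (forall x y, connect e x y) /\
  (forall p : seq 'I_m, 3 <= size p -> uniq p -> ~~ cycle e p).

(* A sign function on edges: s x y = true means the edge xy is positive.
   It must be symmetric, so that it is a function of the (unordered) edge. *)
Definition edge_sign (m : nat) (s : rel 'I_m) : Prop :=
  forall x y, s x y = s y x.

Definition sdeg (m : nat) (e s : rel 'I_m) (v : 'I_m) : int :=
  (#|[set u | e v u && s v u]|%:Z - #|[set u | e v u && ~~ s v u]|%:Z)%R.

Definition realizes (m : nat) (e s : rel 'I_m) (D : int -> Prop) : Prop :=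
  forall z, D z <-> exists v, sdeg e s v = z.

Fixpoint ball (m : nat) (e : rel 'I_m) (k : nat) (x : 'I_m) : {set 'I_m} :=
  match k with
  | 0 => [set x]
  | k.+1 => ball e k x :|: [set y | [exists z in ball e k x, e z y]]
  end.

Definition is_graph_diam (m : nat) (e : rel 'I_m) (d : nat) : Prop :=
  (forall x y, y \in ball e d x) /\
  (forall k, (forall x y, y \in ball e k x) -> d <= k).

Definition signed_tree_realizing (m : nat) (e s : rel 'I_m) (D : int -> Prop) :=
  is_tree e /\ edge_sign s /\ realizes e s D.

Definition is_diamD (D : int -> Prop) (d : nat) : Prop :=
  (exists (m : nat) (e s : rel 'I_m),
      signed_tree_realizing e s D /\ is_graph_diam e d) /\
  (forall (m : nat) (e s : rel 'I_m) (d' : nat),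
      signed_tree_realizing e s D -> is_graph_diam e d' -> d <= d').

(* Main.v *)
Require Import Defs.
From mathcomp Require Import all_boot all_order all_algebra.
From mathcomp Require Import zify.
Import Order.TTheory GRing.Theory Num.Theory.
Set Implicit Arguments. Unset Strict Implicit. Unset Printing Implicit Defensive.

Section Walks.
Variable T : eqType.
Variable e : rel T.
Hypothesis esym : symmetric e.

Lemma last_rev_belast (x : T) p y : last y (rev (belast x p)) = (if p is [::] then y else x).
Proof. by case: p => [|a p] //=; rewrite rev_cons last_rcons. Qed.

Lemma path_rev x p : path e x p ->
  exists q, [/\ path e (last x p) q, last (last x p) q = x & perm_eq (x :: p) (last x p :: q)].
Proof.
move=> pp; exists (rev (belast x p)); split.
- by rewrite rev_path; apply: sub_path pp => a b; rewrite esym.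
- by rewrite last_rev_belast; case: p pp.
- by rewrite lastI perm_rcons perm_cons perm_sym perm_rev.
Qed.

Definition acyc := forall p : seq T, 3 <= size p -> uniq p -> ~~ cycle e p.
Hypothesis eac : acyc.

Lemma no_div x q : path e x q -> uniq (x :: q) ->
  forall p, path e x p -> uniq (x :: p) -> p != [::] -> head x p != head x q ->
  ~~ has (mem q) p.
Proof.
move=> pq uq; elim/last_ind => [//|p1 y IH] pp up _ hd.
rewrite has_rcons negb_or; apply/andP.
move: pp; rewrite rcons_path => /andP[pp1 ey].
have up1 : uniq (x :: p1).
  by move: up; rewrite -cats1 -cat_cons cat_uniq => /andP[].
have H1 : ~~ has (mem q) p1.
  case: p1 IH pp1 up1 hd {ey up} => [|a p1] IH pp1 up1 hd //.
  by apply: IH.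
split=> //; apply/negP => yq.
move: (yq) => /splitPr [q1 q2] in pq uq H1 hd *.
move: pq; rewrite cat_path /= => /and3P[pq1 eq1 _].
have: cycle e (x :: (p1 ++ y :: rev q1)).
  rewrite /= rcons_cat cat_path pp1 /= ey /=.
  have := rev_path e x (rcons q1 y).
  rewrite last_rcons belast_rcons rev_cons => ->.
  rewrite rcons_path; apply/andP; split; first by apply: sub_path pq1 => a b; rewrite esym.
  by rewrite esym.
apply/negP; apply: eac.
- rewrite /= size_cat /= size_rev.
  case: p1 {IH H1 pp1 up1 ey up} hd => [|a p1] /=; last by lia.
  by case: q1 {pq1 eq1 uq} => [|b q1] /=; [rewrite eqxx | lia].
- move=> {IH hd pq1 eq1 pp1 ey}.
  have -> : uniq (x :: p1 ++ y :: rev q1) = uniq ((x :: rcons p1 y) ++ q1).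
    apply: perm_uniq; rewrite /= perm_cons -cats1 -catA /= perm_cat2l perm_cons.
    by rewrite perm_rev.
  rewrite (cat_uniq (x :: rcons p1 y)) up /=.
  move: uq => /= /andP[]; rewrite mem_cat negb_or => /andP[xq1 _].
  rewrite cat_uniq => /and3P[-> hq _].
  rewrite andbT; apply/hasPn => z zq1 /=; rewrite in_cons mem_rcons in_cons negb_or.
  rewrite negb_or; apply/and3P; split.
  - by apply: contraNneq xq1 => <-.
  - apply/negP => /eqP zy; move: hq; rewrite /= negb_or -zy zq1.
    by [].
  - by apply/negP => zp1; move/hasPn: H1 => /(_ z zp1); rewrite /= mem_cat zq1.
Qed.

Lemma path_uniq_eq x p q : path e x p -> path e x q -> uniq (x :: p) -> uniq (x :: q) ->
  last x p = last x q -> p = q.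
Proof.
elim: p x q => [|a p IH] x [|b q] //=.
- move=> _ _ _ /andP[xq _] lq; exfalso.
  by move: (mem_last b q); rewrite -lq (negbTE xq).
- move=> _ _ /andP[xp _] _ lp; exfalso.
  by move: (mem_last a p); rewrite lp (negbTE xp).
move=> Pp Pq Up Uq l.
case: (eqVneq a b) => [ab|ab].
  subst b; congr (_ :: _); apply: (IH a q).
  - by case/andP: Pp. - by case/andP: Pq. - by case/andP: Up. - by case/andP: Uq. - by [].
exfalso.
have := @no_div x (b :: q) Pq Uq (a :: p) Pp Up isT ab.
move/negP; apply; apply/hasP; exists (last a p); first exact: mem_last.
by rewrite inE l mem_last.
Qed.

Lemma path_extend x p y : path e x p -> uniq (x :: p) -> p != [::] -> e y x ->
  y != head x p -> (forall z, ~~ e z z) -> uniq (y :: x :: p).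
Proof.
move=> pp up pn eyx yh irr.
have yx : y != x by apply: contraNneq (irr x) => yx; rewrite -{1}yx eyx.
have -> : uniq (y :: x :: p) = (y \notin x :: p) && uniq (x :: p) by [].
rewrite up andbT in_cons negb_or; apply/andP; split.
  by [].
apply/negP => yp; move: (yp) pp up yh => /splitPr [p1 p2] pp up yh.
have : rcons p1 y = [:: y].
  apply: (@path_uniq_eq x); last by rewrite last_rcons.
  - by move: pp; rewrite -cat_rcons cat_path => /andP[].
  - by rewrite /= esym eyx.
  - by move: up; rewrite -cat_rcons -cat_cons cat_uniq => /andP[].
  - by rewrite /= andbT in_cons negb_or; rewrite eq_sym yx.
case: p1 {pp up yp} yh => [|a p1] /=; first by rewrite eqxx.
by case: p1.
Qed.
End Walks.

Section Ball.
Variable m : nat.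
Variable e : rel 'I_m.

Lemma ball_walk k x y : y \in ball e k x <->
  exists p, [/\ path e x p, last x p = y & size p <= k].
Proof.
elim: k y => [|k IH] y /=.
  rewrite in_set1; split; first by move/eqP->; exists [::].
  by case=> [[|a p]] [] //= _ <-.
rewrite in_setU inE; split.
  case/orP => [/IH [p [pp lp sp]]|/existsP [z /andP [zb ezy]]].
    by exists p; split=> //; apply: leqW.
  have [p [pp lp sp]] := (IH z).1 zb.
  exists (rcons p y); rewrite rcons_path pp lp ezy last_rcons size_rcons; split=> //.
case=> p [pp lp sp].
case: (leqP (size p) k) => hs.
  by apply/orP; left; apply/IH; exists p.
apply/orP; right; apply/existsP.
move: pp lp sp hs; case/lastP: p => [|p a] //.
rewrite rcons_path last_rcons size_rcons => /andP[pp ea] <- sp hs.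
exists (last x p); rewrite ea andbT; apply/IH; exists p; split=> //.
Qed.

Lemma ball_path x p : path e x p -> last x p \in ball e (size p) x.
Proof. by move=> pp; apply/ball_walk; exists p. Qed.

Lemma ball_mono i j x y : i <= j -> y \in ball e i x -> y \in ball e j x.
Proof.
move=> ij /ball_walk [p [pp lp sp]]; apply/ball_walk; exists p; split=> //.
exact: leq_trans ij.
Qed.

Lemma ball_trans i j x y z : y \in ball e i x -> z \in ball e j y -> z \in ball e (i + j) x.
Proof.
move=> /ball_walk [p [pp lp sp]] /ball_walk [q [pq lq sq]].
apply/ball_walk; exists (p ++ q); rewrite cat_path pp last_cat lp pq lq size_cat.
split=> //; exact: leq_add.
Qed.

Hypothesis esym : symmetric e.

Lemma ball_sym i x y : y \in ball e i x -> x \in ball e i y.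
Proof.
move=> /ball_walk [p [pp lp sp]].
have [q [pq lq pe]] := path_rev esym pp.
apply/ball_walk; exists q; rewrite -lp; split=> //.
by move/perm_size: pe => /= [] <-.
Qed.

Hypothesis eac : acyc e.

Lemma dist_le x p k : path e x p -> uniq (x :: p) -> last x p \in ball e k x -> size p <= k.
Proof.
move=> pp up /ball_walk [w [pw lw sw]].
move: lw; case: (shortenP pw) => w' pw' uw' sub lw.
have -> : p = w' by apply: (path_uniq_eq esym eac pp pw' up uw').
apply: leq_trans sw; apply: uniq_leq_size => //.
by case/andP: uw'.
Qed.
End Ball.

Definition NB m (e : rel 'I_m) (u : 'I_m) := forall c, exists a, e u a /\ a != c.

Lemma long_path m (e : rel 'I_m) u v : is_tree e -> u != v -> NB e u -> NB e v ->
  exists x p, [/\ path e x p, uniq (x :: p), 3 <= size p & (~~ e u v -> 4 <= size p)].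
Proof.
move=> [_ [[esym irr] [conn eac]]] uv nu nv.
have es : symmetric e by move=> ? ?; apply: esym.
have /connectP [p0 pp0 lp0] := conn u v.
move: lp0; case: (shortenP pp0) => P pP uP _ lP {p0 pp0}.
have Pn : P != [::] by case: P lP {pP uP} => //= lP; rewrite lP eqxx in uv.
have [a [ua ah]] := nu (head u P).
have ua' : e a u by rewrite es.
have uaP := path_extend es eac pP uP Pn ua' ah irr.
have paP : path e a (u :: P) by rewrite /= ua' pP.
have [q [pq lq pe]] := path_rev es paP.
move: pq lq pe; rewrite [last a _]/= => pq lq pe.
have uq : uniq (last u P :: q) by rewrite -(perm_uniq pe).
have sq : size q = (size P).+1 by move/perm_size: pe => /= [] ->.
have qn : q != [::] by case: q sq {pq lq pe uq}.
have [b [vb bh]] := nv (head (last u P) q).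
rewrite lP in vb bh.
have vb' : e b (last u P) by rewrite es.
have ubq := path_extend es eac pq uq qn vb' bh irr.
exists b, (last u P :: q); split.
- by rewrite /= vb' pq.
- exact: ubq.
- by rewrite /= sq !ltnS lt0n size_eq0.
- move=> nuv; rewrite /= sq ltnS.
  case: P Pn {uaP paP pe sq qn uq ah pq vb vb' ubq bh lq} pP uP lP => [|w [|w2 P]] //= _.
  by rewrite andbT => euw _ wv; rewrite wv euw in nuv.
Qed.

Lemma sdeg_NB m (e s : rel 'I_m) v : (2 <= sdeg e s v)%R -> NB e v.
Proof.
rewrite /sdeg => h c.
set A := [set u | e v u && s v u] in h *.
have hA : 2 <= #|A| by lia.
have : 0 < #|A :\ c|.
  move: hA; rewrite (cardsD1 c A); case: (c \in A) => /=; lia.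
case/card_gt0P => a; rewrite !inE => /andP[ac /andP[eva _]].
by exists a.
Qed.

Definition Dx n (x : 'I_n -> int) := fun z : int => z = 1%R \/ exists i, z = x i.

Lemma lower n (x : 'I_n -> int) m (e s : rel 'I_m) k : injective x -> (forall i, (1 < x i)%R) ->
  signed_tree_realizing e s (Dx x) -> (forall a b, b \in ball e k a) ->
  [/\ 1 <= n -> 2 <= k, 2 <= n -> 3 <= k & 3 <= n -> 4 <= k].
Proof.
move=> xinj x1 [tr [_ real]] hk.
have tr' := tr.
move: tr' => [_ [[esym irr] [conn eac]]].
have es : symmetric e by move=> ? ?; apply: esym.
have vert : forall i, exists v, sdeg e s v = x i /\ NB e v.
  move=> i; have [v hv] := (real (x i)).1 (or_intror (ex_intro _ i erefl)).
  exists v; split=> //; apply: (@sdeg_NB _ e s); rewrite hv; have := x1 i; lia.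
have distinct : forall i j u v, i != j -> sdeg e s u = x i -> sdeg e s v = x j -> u != v.
  move=> i j u v ij hu hv; apply/eqP => uv; subst v.
  by move: ij; rewrite hu in hv; rewrite (xinj _ _ hv) eqxx.
split.
- case: n x xinj x1 real vert distinct => // n x _ _ _ vert _ _.
  have [v [_ nv]] := vert ord0.
  have [a1 [va1 _]] := nv v.
  have [a2 [va2 a21]] := nv a1.
  have p : path e a1 [:: v; a2] by rewrite /= es va1 va2.
  apply: (dist_le es eac p) => //.
  have n1 : a1 != v by apply: contraTneq va1 => ->; exact: irr.
  have n2 : v != a2 by apply: contraTneq va2 => <-; exact: irr.
  by rewrite /= !inE negb_or n1 (eq_sym a1) a21 n2.
- case: n x xinj x1 real vert distinct => [|[|n]] // x _ _ _ vert distinct _.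
  have [u [hu nu]] := vert ord0.
  have [v [hv nv]] := vert (lift ord0 ord0).
  have uv := distinct ord0 (lift ord0 ord0) _ _ isT hu hv.
  have [a [p [pp up sp _]]] := long_path tr uv nu nv.
  apply: leq_trans sp _; exact: (dist_le es eac pp up).
- case: n x xinj x1 real vert distinct => [|[|[|n]]] // x _ _ _ vert distinct _.
  pose i0 : 'I_n.+3 := ord0.
  pose i1 : 'I_n.+3 := lift ord0 ord0.
  pose i2 : 'I_n.+3 := lift ord0 (lift ord0 ord0).
  have [u0 [h0 n0]] := vert i0.
  have [u1 [h1 n1]] := vert i1.
  have [u2 [h2 n2]] := vert i2.
  have d01 := distinct i0 i1 _ _ isT h0 h1.
  have d12 := distinct i1 i2 _ _ isT h1 h2.
  have d02 := distinct i0 i2 _ _ isT h0 h2.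
  have far : forall u v, u != v -> NB e u -> NB e v -> ~~ e u v -> 4 <= k.
    move=> u v uv nu nv nuv.
    have [a [p [pp up _ sp]]] := long_path tr uv nu nv.
    apply: leq_trans (sp nuv) _; exact: (dist_le es eac pp up).
  case: (boolP (e u0 u1)) => [e01|]; last exact: far d01 n0 n1.
  case: (boolP (e u1 u2)) => [e12|]; last exact: far d12 n1 n2.
  case: (boolP (e u0 u2)) => [e02|]; last exact: far d02 n0 n2.
  exfalso.
  have U : uniq [:: u0; u1; u2] by rewrite /= !inE negb_or d01 d02 d12.
  by move: (eac [:: u0; u1; u2] isT U); rewrite /= e01 e12 es e02.
Qed.
Section PTree.
Variable T : finType.
Variables (e : rel T) (r : T) (par : T -> T) (dep : T -> nat).
Hypothesis es : symmetric e.
Hypothesis hpar : forall x, x != r -> e x (par x) && (dep (par x) < dep x).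
Hypothesis hedge : forall x y, e x y -> (y == par x) && (dep y < dep x) || (x == par y) && (dep x < dep y).

Lemma pt_irr x : ~~ e x x.
Proof. by apply/negP => /hedge; rewrite ltnn !andbF. Qed.

Lemma pt_conn x y : connect e x y.
Proof.
have toroot : forall z, connect e z r.
  move=> z; elim: {z}(dep z) {-2}z (leqnn (dep z)) => [|d IH] z hz.
    case: (eqVneq z r) => [->|zr]; first exact: connect0.
    by have := hpar zr; rewrite ltnNge; move: hz; rewrite leqn0 => /eqP -> /andP[_].
  case: (eqVneq z r) => [->|zr]; first exact: connect0.
  have /andP[ez dz] := hpar zr.
  apply: connect_trans (connect1 ez) (IH _ _); lia.
apply: connect_trans (toroot x) _.
by rewrite (sym_connect_sym es); apply: toroot.
Qed.

Lemma pt_acyc : acyc e.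
Proof.
move=> p sp up; apply/negP => cp.
have p0 : head r p \in p by case: p sp {up cp} => //= a p _; rewrite inE eqxx.
case: (arg_maxnP dep (P := fun z => z \in p) p0) => w wp wmax.
case: (rot_to wp) => i p' hrot.
have : cycle e (w :: p') by rewrite -hrot rot_cycle.
have : uniq (w :: p') by rewrite -hrot rot_uniq.
have sp' : 2 <= size p' by move: sp; rewrite -(size_rot i p) hrot /=.
have memp : forall z, z \in p' -> dep z <= dep w.
  by move=> z zp; apply: wmax; rewrite -(mem_rot i) hrot inE zp orbT.
case: p' hrot sp' memp => [|a [|b p'']] // hrot _ memp.
rewrite /= rcons_path => /andP [_ /andP [ua _]] /andP [ewa /andP [_ /andP [_ ebw]]].
have ha : a = par w.
  move: (hedge ewa) => /orP [/andP[/eqP //]|/andP [_ lt]].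
  by move: (memp a); rewrite inE eqxx => /(_ isT) ?; exfalso; lia.
have hb : last b p'' = par w.
  move: (hedge ebw) => /orP [/andP[_ lt]|/andP [/eqP // _]].
  by move: (memp (last b p'')); rewrite in_cons mem_last orbT => /(_ isT) h; rewrite ltnNge h in lt.
by move: ua; rewrite ha -hb mem_last.
Qed.
End PTree.
Section Transfer.
Variable T : finType.
Variables e s : rel T.
Definition eI : rel 'I_#|T| := fun x y => e (enum_val x) (enum_val y).
Definition sI : rel 'I_#|T| := fun x y => s (enum_val x) (enum_val y).
Definition sdegT (v : T) : int :=
  (#|[set u | e v u && s v u]|%:Z - #|[set u | e v u && ~~ s v u]|%:Z)%R.

Lemma card_transfer (P : pred T) : #|[set u : 'I_#|T| | P (enum_val u)]| = #|[set t | P t]|.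
Proof.
rewrite -[LHS](card_imset _ (@enum_val_inj _ T)); apply: eq_card => t.
rewrite inE; apply/imsetP/idP => [[u]|pt]; first by rewrite inE => ? ->.
by exists (enum_rank t); rewrite ?inE enum_rankK.
Qed.

Lemma sdegI v : sdeg eI sI v = sdegT (enum_val v).
Proof.
by rewrite /sdeg /sdegT /eI /sI (card_transfer (fun u => e (enum_val v) u && s (enum_val v) u))
  (card_transfer (fun u => e (enum_val v) u && ~~ s (enum_val v) u)).
Qed.

Lemma realizesI (D : int -> Prop) : (forall z, D z <-> exists t, sdegT t = z) -> realizes eI sI D.
Proof.
move=> h z; rewrite h; split=> [[t <-]|[v <-]].
  by exists (enum_rank t); rewrite sdegI enum_rankK.
by exists (enum_val v); rewrite sdegI.
Qed.

Lemma pathI a p : path e a p -> path eI (enum_rank a) (map enum_rank p).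
Proof.
elim: p a => [|b p IH] a //= /andP[eab pp].
by rewrite IH // andbT /eI !enum_rankK.
Qed.

Lemma ballI a p : path e a p -> enum_rank (last a p) \in ball eI (size p) (enum_rank a).
Proof.
move=> pp; have := ball_path (pathI pp).
by rewrite size_map (last_map enum_rank).
Qed.

Variables (r : T) (par : T -> T) (dep : T -> nat).
Hypothesis es : symmetric e.
Hypothesis hpar : forall x, x != r -> e x (par x) && (dep (par x) < dep x).
Hypothesis hedge : forall x y, e x y -> (y == par x) && (dep y < dep x) || (x == par y) && (dep x < dep y).

Lemma eq_rank (y : 'I_#|T|) t : (y == enum_rank t) = (enum_val y == t).
Proof. by apply/eqP/eqP => [->|<-]; rewrite ?enum_rankK ?enum_valK. Qed.

Lemma treeI : is_tree eI.
Proof.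
pose parI := fun x : 'I_#|T| => enum_rank (par (enum_val x)).
pose depI := fun x : 'I_#|T| => dep (enum_val x).
have esI : symmetric eI by move=> x y; rewrite /eI es.
have hparI : forall x, x != enum_rank r -> eI x (parI x) && (depI (parI x) < depI x).
  by move=> x; rewrite eq_rank => /hpar; rewrite /eI /parI /depI enum_rankK.
have hedgeI : forall x y, eI x y -> (y == parI x) && (depI y < depI x) || (x == parI y) && (depI x < depI y).
  by move=> x y /hedge; rewrite /parI /depI !eq_rank.
split; first by apply/card_gt0P; exists r.
split; first by split; [exact: esI | exact: (pt_irr hedgeI)].
split; first exact: (pt_conn esI hparI).
exact: (pt_acyc (enum_rank r) hedgeI).
Qed.

Lemma esignI : symmetric s -> edge_sign sI.
Proof. by move=> ss x y; rewrite /sI ss. Qed.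
End Transfer.


Lemma card_img (A B : finType) (f : A -> B) (P : pred B) (Q : pred A) :
  injective f -> (forall a, P (f a) = Q a) -> (forall b, P b -> exists a, b = f a) ->
  #|[set b | P b]| = #|[set a | Q a]|.
Proof.
move=> finj hPQ hs; rewrite -(card_imset _ finj); apply: eq_card => b; rewrite !inE.
apply/idP/imsetP => [Pb|[a]]; last by rewrite inE => Qa ->; rewrite hPQ.
by have [a eb] := hs b Pb; subst b; exists a => //; rewrite inE -hPQ.
Qed.

Section Model.
Variables (I : finType) (L : I -> nat) (sg : I -> bool).
Definition leafT := {j : I & 'I_(L j)}.
Definition VT := option (I + leafT)%type.
Definition VTf : finType := VT.

Definition eT (x y : VT) : bool :=
  match x, y with
  | None, Some (inl _) => true
  | Some (inl _), None => true
  | Some (inl j), Some (inr p) => tag p == j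
  | Some (inr p), Some (inl j) => tag p == j
  | _, _ => false
  end.
Definition sT (x y : VT) : bool :=
  match x, y with
  | None, Some (inl j) => sg j
  | Some (inl j), None => sg j
  | _, _ => true
  end.
Definition parT (x : VT) : VT :=
  match x with Some (inr p) => Some (inl (tag p)) | _ => None end.
Definition depT (x : VT) : nat :=
  match x with None => 0 | Some (inl _) => 1 | Some (inr _) => 2 end.

Lemma eT_sym : symmetric eT.
Proof. by case=> [[j|p]|] [[j'|p']|]. Qed.
Lemma sT_sym : symmetric sT.
Proof. by case=> [[j|p]|] [[j'|p']|]. Qed.
Lemma hparT x : x != None -> eT x (parT x) && (depT (parT x) < depT x).
Proof. by case: x => [[j|p]|] //= _; rewrite eqxx. Qed.
Lemma hedgeT x y : eT x y -> (y == parT x) && (depT y < depT x) || (x == parT y) && (depT x < depT y).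
Proof. by move: x y; case=> [[j|[j1 t1]]|] [[j'|[j2 t2]]|] //=; try (move=> /eqP ->); rewrite ?eqxx ?orbT. Qed.

Lemma Tagged_inj j : injective (fun t : 'I_(L j) => Tagged (fun j => 'I_(L j)) t).
Proof. by move=> t1 t2 /= h; have := congr1 (tagged_as (Tagged (fun j => 'I_(L j)) t1)) h; rewrite !tagged_asE. Qed.

Lemma sdeg_root : sdegT eT sT None = (#|[set j | sg j]|%:Z - #|[set j | ~~ sg j]|%:Z)%R.
Proof.
rewrite /sdegT (@card_img _ _ (fun j => Some (inl j)) _ (fun j => sg j)) //; last first.
- by case=> [[j|p]|] //= h; exists j.
- by move=> a b [].
rewrite (@card_img _ _ (fun j => Some (inl j)) _ (fun j => ~~ sg j)) //.
- by move=> a b [].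
- by case=> [[j|p]|] //= h; exists j.
Qed.

Lemma sdeg_mid j : sdegT eT sT (Some (inl j)) = ((sg j + L j)%:Z - (~~ sg j)%:Z)%R.
Proof.
rewrite /sdegT.
pose f := fun o : option 'I_(L j) => if o is Some t then Some (inr (Tagged (fun j => 'I_(L j)) t)) : VT else None.
have finj : injective f.
  case=> [t1|] [t2|] //= h.
  have := congr1 (fun v : VT => if v is Some (inr q) then Some q else None) h => /= [] h'.
  by case: h' => /Tagged_inj ->.
have fs : forall b, eT (Some (inl j)) b -> exists a, b = f a.
  case=> [[j'|[j' t]]|] //= h; last by exists None.
  by move/eqP: h => h; subst j'; exists (Some t).
rewrite (@card_img _ _ f _ (fun o => if o is None then sg j else true)) //; last first.
- by move=> b /andP[/fs].
- by case=> [t|] //=; rewrite eqxx.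
have -> : #|[set u | eT (Some (inl j)) u && ~~ sT (Some (inl j)) u]| = ~~ sg j.
  case hs: (sg j) => /=.
    by apply/eqP; rewrite cards_eq0; apply/eqP/setP => u; rewrite !inE; case: u => [[j'|p]|] //=; rewrite ?hs ?andbF.
  rewrite -(cards1 (None : VT)); apply: eq_card => u; rewrite !inE; case: u => [[j'|p]|] //=; rewrite ?hs ?andbF //; apply/esym/eqP.
case: (sg j) => /=.
  have -> : [set a : option 'I_(L j) | if a is None then true else true] = setT.
    by apply/setP => a; rewrite !inE; case: a.
  by rewrite cardsT card_option card_ord.
rewrite (@card_img _ _ (@Some 'I_(L j)) _ predT) //; last first.
- by case=> [t|] //= _; exists t.
- by move=> a b [].
rewrite -[in RHS](card_ord (L j)) -cardsT; congr (_%:Z - _)%R; apply: eq_card => a; rewrite !inE.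
Qed.

Lemma sdeg_leaf p : sdegT eT sT (Some (inr p)) = 1%R.
Proof.
rewrite /sdegT.
have -> : [set u | eT (Some (inr p)) u && sT (Some (inr p)) u] = [set Some (inl (tag p))].
  by apply/setP => u; rewrite !inE; case: u => [[j'|p']|] //=; rewrite andbT eq_sym.
have -> : [set u | eT (Some (inr p)) u && ~~ sT (Some (inr p)) u] = set0.
  by apply/setP => u; rewrite !inE; case: u => [[j'|p']|] //=; rewrite andbF.
by rewrite cards1 cards0.
Qed.

Lemma treeM : is_tree (eI eT).
Proof. exact: (treeI (r := None) eT_sym hparT hedgeT). Qed.

Lemma signM : edge_sign (sI sT).
Proof. exact: (esignI sT_sym). Qed.

Lemma ball_rootM (t : VT) : enum_rank t \in ball (eI eT) (depT t) (enum_rank (None : VT)).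
Proof.
case: t => [[j|p]|].
- by have := ballI (e := eT) (a := None) (p := [:: Some (inl j)]) isT.
- have := ballI (e := eT) (a := None) (p := [:: Some (inl (tag p)); Some (inr p)]).
  by rewrite /= eqxx; apply.
- by have := ballI (e := eT) (a := None) (p := [::]) isT.
Qed.
End Model.


Lemma diamD_of n (x : 'I_n -> int) d m (e s : rel 'I_m) :
  (forall m (e s : rel 'I_m) k, signed_tree_realizing e s (Dx x) -> (forall a b, b \in ball e k a) -> d <= k) ->
  signed_tree_realizing e s (Dx x) -> (forall a b, b \in ball e d a) -> is_diamD (Dx x) d.
Proof.
move=> low str hb; split.
  exists m, e, s; split=> //; split=> // k hk; exact: low str hk.
by move=> m' e' s' d' str' [hd _]; exact: low str' hd.
Qed.

Lemma ball_all m (e : rel 'I_m) (c : 'I_m) i : symmetric e ->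
  (forall a, a \in ball e i c) -> (forall a b, b \in ball e (i + i) a).
Proof.
move=> es h a b; apply: ball_trans (h b); exact: ball_sym (h a).
Qed.

Lemma ballM (I : finType) (L : I -> nat) (a : 'I_#|VTf L|) :
  a \in ball (eI (T := VTf L) (@eT I L)) (depT (enum_val a)) (enum_rank (None : VTf L)).
Proof. by have := ball_rootM (enum_val a); rewrite enum_valK. Qed.

Lemma card_false (T : finType) : #|[set _ : T | false]| = 0.
Proof. by apply/eqP; rewrite cards_eq0; apply/eqP/setP => u; rewrite !inE. Qed.

Lemma star_case (x : 'I_1 -> int) : (forall i, (1 < x i)%R) ->
  exists m (e s : rel 'I_m), signed_tree_realizing e s (Dx x) /\ forall a b, b \in ball e 2 a.
Proof.
move=> x1; set k := absz (x ord0).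
have k2 : 2 <= k by have := x1 ord0; rewrite /k; lia.
pose L := fun _ : 'I_k => 0.
pose sg := fun _ : 'I_k => true.
exists #|VTf L|, (eI (T := VTf L) (@eT _ L)), (sI (T := VTf L) (sT sg)); split.
  split; first exact: treeM.
  split; first exact: signM.
  apply: realizesI => z; split.
  - case=> [->|[i ->]].
      have j0 : 'I_k := Ordinal (leq_trans (isT : 0 < 2) k2).
      by exists (Some (inl j0)); rewrite sdeg_mid.
    have xi : x i = x ord0 by congr x; apply: val_inj; case: i => [[|]].
    exists None; rewrite sdeg_root /sg cardsT card_ord card_false xi /k.
    have := x1 ord0; lia.
  - case=> t <-; case: t => [[j|p]|].
    + by left; rewrite sdeg_mid.
    + by left; rewrite sdeg_leaf.
    + right; exists ord0; rewrite sdeg_root /sg cardsT card_ord card_false /k.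
      have := x1 ord0; lia.
apply: (@ball_all _ _ (enum_rank (None : VTf L)) 1); first by move=> ? ?; rewrite /eI eT_sym.
move=> a; apply: ball_mono (ballM a).
by case: (enum_val a) => [[j|[j [t ht]]]|].
Qed.

Lemma ball3 m (e : rel 'I_m) (R V : 'I_m) : symmetric e -> V \in ball e 1 R ->
  (forall a, a \in ball e 1 R \/ a \in ball e 1 V) -> forall a b, b \in ball e 3 a.
Proof.
move=> es VR h.
have h2 : forall a, a \in ball e 2 R.
  move=> a; case: (h a) => ha; first exact: ball_mono ha.
  exact: (ball_trans VR ha).
move=> a b; case: (h a) => ha.
  exact: (ball_trans (ball_sym es ha) (h2 b)).
case: (h b) => hb.
  exact: (ball_trans (ball_sym es ha) (ball_trans (ball_sym es VR) hb)).
exact: ball_mono (ball_trans (ball_sym es ha) hb).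
Qed.

Lemma dstar_case (x : 'I_2 -> int) : injective x -> (forall i, (1 < x i)%R) ->
  exists m (e s : rel 'I_m), signed_tree_realizing e s (Dx x) /\ forall a b, b \in ball e 3 a.
Proof.
move=> xinj x1.
pose i0 : 'I_2 := ord0. pose i1 : 'I_2 := Ordinal (isT : 1 < 2).
have xi : forall i, x i = x i0 \/ x i = x i1.
  by case=> [[|[|//]] hi]; [left|right]; congr x; apply: val_inj.
set k := absz (x i0).
have k2 : 2 <= k by have := x1 i0; rewrite /k; lia.
pose j0 : 'I_k := Ordinal (leq_trans (isT : 0 < 2) k2).
pose j1 : 'I_k := Ordinal k2.
pose L := fun j : 'I_k => if j == j0 then (absz (x i1)).-1 else 0.
pose sg := fun _ : 'I_k => true.
exists #|VTf L|, (eI (T := VTf L) (@eT _ L)), (sI (T := VTf L) (sT sg)); split.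
  split; first exact: treeM.
  split; first exact: signM.
  apply: realizesI => z; split.
  - case=> [->|[i ->]].
      by exists (Some (inl j1)); rewrite sdeg_mid /L.
    case: (xi i) => ->.
      exists None; rewrite sdeg_root /sg cardsT card_ord card_false /k.
      have := x1 i0; lia.
    exists (Some (inl j0)); rewrite sdeg_mid /L eqxx /sg.
    have := x1 i1; lia.
  - case=> t <-; case: t => [[j|p]|].
    + rewrite sdeg_mid /L /sg; case: eqP => _.
        by right; exists i1; have := x1 i1; lia.
      by left.
    + by left; rewrite sdeg_leaf.
    + right; exists i0; rewrite sdeg_root /sg cardsT card_ord card_false /k.
      have := x1 i0; lia.
have es : symmetric (eI (T := VTf L) (@eT _ L)) by move=> ? ?; rewrite /eI eT_sym.
apply: (ball3 (R := enum_rank (None : VTf L)) (V := enum_rank (Some (inl j0) : VTf L))) => //.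
  exact: (ball_rootM (Some (inl j0) : VTf L)).
move=> a; rewrite -(enum_valK a); case: (enum_val a) => [[j|p]|].
- by left; exact: (ball_rootM (Some (inl j) : VTf L)).
- right.
have tp : tag p == j0.
  by case: p => j [t ht] /=; move: ht; rewrite /L; case: eqP.
by have := ballI (e := @eT _ L) (a := Some (inl j0)) (p := [:: Some (inr p)]); rewrite /= tp; apply.
- by left; apply: ball_mono (ball_rootM (None : VTf L)).
Qed.

Lemma spider_case n (x : 'I_n -> int) : (forall i, (1 < x i)%R) ->
  exists m (e s : rel 'I_m), signed_tree_realizing e s (Dx x) /\ forall a b, b \in ball e 4 a.
Proof.
move=> x1.
pose L := fun j : ('I_n + 'I_n.+1)%type => if j is inl i then (absz (x i)).+1 else 0.
pose sg := fun j : ('I_n + 'I_n.+1)%type => if j is inl _ then false else true.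
have hroot : sdegT (@eT _ L) (sT sg) None = 1%R.
  rewrite sdeg_root.
  rewrite (@card_img _ _ (@inr 'I_n 'I_n.+1) _ predT) //; last first.
  - by case=> // a _; exists a.
  - by move=> a b [].
  rewrite (@card_img _ _ (@inl 'I_n 'I_n.+1) _ predT) //; last first.
  - by case=> // a _; exists a.
  - by move=> a b [].
  have hc : forall T : finType, #|[set a : T | predT a]| = #|T| by move=> T; rewrite -cardsT.
  by rewrite !hc !card_ord; lia.
exists #|VTf L|, (eI (T := VTf L) (@eT _ L)), (sI (T := VTf L) (sT sg)); split.
  split; first exact: treeM.
  split; first exact: signM.
  apply: realizesI => z; split.
  - case=> [->|[i ->]]; first by exists None.
    exists (Some (inl (inl i))); rewrite sdeg_mid /L /sg /=.
    have := x1 i; lia.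
  - case=> t <-; case: t => [[[i|i]|p]|].
    + right; exists i; rewrite sdeg_mid /L /sg /=; have := x1 i; lia.
    + by left; rewrite sdeg_mid.
    + by left; rewrite sdeg_leaf.
    + by left.
apply: (@ball_all _ _ (enum_rank (None : VTf L)) 2); first by move=> ? ?; rewrite /eI eT_sym.
move=> a; apply: ball_mono (ballM a).
by case: (enum_val a) => [[j|p]|].
Qed.

Unset Implicit Arguments.

Theorem mainTheorem2 (n : nat) (x : 'I_n -> int) :
  1 <= n -> injective x -> (forall i, (1 < x i)%R) ->
  let D := fun z : int => z = 1%R \/ exists i, z = x i in
  (n = 1 -> is_diamD D 2) /\
  (n = 2 -> is_diamD D 3) /\
  (2 < n -> is_diamD D 4).
Proof.
move=> n1 xinj x1 D.
have low : forall m (e s : rel 'I_m) k, signed_tree_realizing e s (Dx x) ->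
    (forall a b, b \in ball e k a) -> [/\ 1 <= n -> 2 <= k, 2 <= n -> 3 <= k & 3 <= n -> 4 <= k].
  by move=> m e s k str hk; exact: (lower xinj x1 str hk).
split; [|split].
- move=> hn.
  have [m [e [s [str hb]]]] : exists m (e s : rel 'I_m), signed_tree_realizing e s (Dx x) /\ forall a b, b \in ball e 2 a.
    by move: x xinj x1 low {D}; rewrite hn => x xinj x1 low; exact: star_case.
  apply: (diamD_of (m := m) (e := e) (s := s)) => // m' e' s' k str' hk.
  by case: (low _ _ _ _ str' hk) => /(_ n1).
- move=> hn.
  have [m [e [s [str hb]]]] : exists m (e s : rel 'I_m), signed_tree_realizing e s (Dx x) /\ forall a b, b \in ball e 3 a.
    by move: x xinj x1 low {D}; rewrite hn => x xinj x1 low; exact: dstar_case.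
  apply: (diamD_of (m := m) (e := e) (s := s)) => // m' e' s' k str' hk.
  by case: (low _ _ _ _ str' hk) => _ /(_ (eq_leq (esym hn))).
- move=> hn.
  have [m [e [s [str hb]]]] := spider_case x1.
  apply: (diamD_of (m := m) (e := e) (s := s)) => // m' e' s' k str' hk.
  by case: (low _ _ _ _ str' hk) => _ _ /(_ hn).
Qed.
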